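(* Let $\Sigma_A=(X,X_0,U,M,G_A,O_A)$ be the augmented transition system and let $\eta_x,\eta_u>0$, $M_{\max}\in\mathbb{N}_{>0}$ and $\varepsilon\ge\eta_x$. Let $\widetilde\Sigma^\varepsilon_A=(\widetilde X,\widetilde X_0,\widetilde U,\widetilde M,\widetilde G_A,\widetilde O_A)$ be the symbolic model of $\Sigma_A$ with these parameters. Then the relation $$R(\varepsilon)=\{(\tilde x,x)\in\widetilde X\times X:\ \|\tilde x-x\|\le\varepsilon\}$$ is a strong $\varepsilon$-approximate alternating simulation relation (strong $\varepsilon$-ASR) from $\widetilde\Sigma^\varepsilon_A$ to $\Sigma_A$.
   Context: Standing setup: a plant $x_{k+1}=f(x_k,u_k)$ with $f:\mathbb{R}^{n_x}\times\mathbb{R}^{n_u}\to\mathbb{R}^{n_x}$, compact initial set $X_0\subset\mathbb{R}^{n_x}$ and compact input set $U\subset\mathbb{R}^{n_u}$; there is $L_x\ge0$ with $\|f(x_1,u)-f(x_2,u)\|\le L_x\|x_1-x_2\|$ for all $x_1,x_2\in\mathbb{R}^{n_x}$, $u\in U$. $\|\cdot\|$ is the Euclidean norm and $\mathcal{B}_r(y)=\{y':\|y'-y\|\le r\}$. $\phi(x,u,m)$ ($m\ge1$ integer) is the state reached from $x$ by applying $u$ constantly for $m$ steps: $x_0=x$, $x_{k+1}=f(x_k,u)$, $\phi(x,u,m)=x_m$. Lattice: for $Y\subseteq\mathbb{R}^n$ and $\eta>0$, $[Y]_\eta=\{y\in Y:\ y_i=\frac{2\eta}{\sqrt n}a_i,\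 a_i\in\mathbb{Z},\ i=1,\dots,n\}$. Augmented transition system $\Sigma_A=(X,X_0,U,M,G_A,O_A)$: $X=\mathbb{R}^{n_x}$; $M=\mathbb{N}_{>0}$; $x^+\in G_A(x,u,m)$ iff $x^+=\phi(x,u,m)$; $O_A(x,u,m)$ is a set of finite state sequences with $(x_1,\dots,x_m)\in O_A(x,u,m)$ iff $x_p\in G_A(x,u,p)$ for all $p=1,\dots,m$. Symbolic model $\widetilde\Sigma^\varepsilon_A=(\widetilde X,\widetilde X_0,\widetilde U,\widetilde M,\widetilde G_A,\widetilde O_A)$ (defined for $\varepsilon\ge\eta_x$): $\widetilde X=[\mathbb{R}^{n_x}]_{\eta_x}$, $\widetilde X_0=[X_0]_{\eta_x}$, $\widetilde U=[U]_{\eta_u}$, $\widetilde M=\{1,\dots,M_{\max}\}$; $\tilde x^+\in\widetilde G_A(\tilde x,\tilde u,\tilde m)$ iff $\tilde x^+\in\widetilde X\cap\mathcal{B}_{\varepsilon_{\tilde m}}(\phi(\tilde x,\tilde u,\tilde m))$ where $\varepsilon_{\tilde m}=L_x^{\tilde m}\varepsilon+\eta_x$; $(\tilde x_1,\dots,\tilde x_{\tilde m})\in\widetilde O_A(\tilde x,\tilde u,\tilde m)$ iff $\tilde x_p\in\widetilde G_A(\tilde x,\tilde u,p)$ for all $p=1,\dots,\tilde m$. Strong $\varepsilon$-ASR: a relation $R\subseteq\widetilde X\times X$ is a strong $\varepsilon$-ASR from $\widetilde\Sigma^\varepsilon_A$ to $\Sigma_A$ if (D1) for every $\tilde x_0\in\widetilde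 X_0$ there is $x_0\in X_0$ with $(\tilde x_0,x_0)\in R$; (D2) every $(\tilde x,x)\in R$ satisfies $\|\tilde x-x\|\le\varepsilon$; (D3) for every $(\tilde x,x)\in R$ and every $\tilde u\in\widetilde U$, $\tilde m\in\widetilde M$, taking $u=\tilde u\in U$ and $m=\tilde m\in M$, for every $(x_1,\dots,x_m)\in O_A(x,u,m)$ there exists $(\tilde x_1,\dots,\tilde x_{m})\in\widetilde O_A(\tilde x,\tilde u,\tilde m)$ with $(\tilde x_p,x_p)\in R$ for all $p=1,\dots,m$. *)

(* Defs.v *)
From Stdlib Require Import Reals ZArith.
From mathcomp Require Import all_boot.
Open Scope R_scope.

Definition vec (n : nat) := 'I_n -> R.

Definition vnorm {n : nat} (x : vec n) : R :=
  sqrt (\big[Rplus/R0]_(i < n) (x i * x i)).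

Definition vdist {n : nat} (x y : vec n) : R := vnorm (fun i => x i - y i).

Definition vzero (n : nat) : vec n := fun _ => R0.

(* Compactness in R^n: closed and bounded (Heine-Borel). *)
Definition closed_set {n : nat} (S : vec n -> Prop) : Prop :=
  forall y, (forall e, 0 < e -> exists z, S z /\ vdist z y < e) -> S y.
Definition bounded_set {n : nat} (S : vec n -> Prop) : Prop :=
  exists r, forall y, S y -> vnorm y <= r.
Definition compact_set {n : nat} (S : vec n -> Prop) : Prop :=
  closed_set S /\ bounded_set S.

Definition lattice {n : nat} (Y : vec n -> Prop) (eta : R) (y : vec n) : Prop :=
  Y y /\ forall i : 'I_n, exists a : Z, y i = 2 * eta / sqrt (INR n) * IZR a.

Definition phi {nx nu : nat} (f : vec nx -> vec nu -> vec nx)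
  (x : vec nx) (u : vec nu) (m : nat) : vec nx := ssrnat.iter m (fun z => f z u) x.

Definition M_A (m : nat) : Prop := (1 <= m)%N.
Definition G_A {nx nu : nat} (f : vec nx -> vec nu -> vec nx)
  (x : vec nx) (u : vec nu) (m : nat) (xp : vec nx) : Prop := xp = phi f x u m.
(* a finite sequence (x_1,...,x_m) is stored as a seq of size m,
   x_p being the element of index p-1 *)
Definition O_A {nx nu : nat} (f : vec nx -> vec nu -> vec nx)
  (x : vec nx) (u : vec nu) (m : nat) (xs : seq (vec nx)) : Prop :=
  size xs = m /\
  forall p : nat, (1 <= p <= m)%N -> G_A f x u p (nth (@vzero nx) xs (p - 1)%N).

Definition Xt (nx : nat) (eta_x : R) : vec nx -> Prop :=
  lattice (fun _ => True) eta_x.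
Definition Xt0 {nx : nat} (X0 : vec nx -> Prop) (eta_x : R) : vec nx -> Prop :=
  lattice X0 eta_x.
Definition Ut {nu : nat} (U : vec nu -> Prop) (eta_u : R) : vec nu -> Prop :=
  lattice U eta_u.
Definition Mt (Mmax : nat) (m : nat) : Prop := (1 <= m <= Mmax)%N.
Definition eps_m (Lx eps eta_x : R) (m : nat) : R := Lx ^ m * eps + eta_x.
Definition Gt {nx nu : nat} (f : vec nx -> vec nu -> vec nx) (Lx eps eta_x : R)
  (xt : vec nx) (ut : vec nu) (m : nat) (xp : vec nx) : Prop :=
  Xt nx eta_x xp /\ vdist xp (phi f xt ut m) <= eps_m Lx eps eta_x m.
Definition Ot {nx nu : nat} (f : vec nx -> vec nu -> vec nx) (Lx eps eta_x : R)
  (xt : vec nx) (ut : vec nu) (m : nat) (xs : seq (vec nx)) : Prop :=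
  size xs = m /\
  forall p : nat, (1 <= p <= m)%N ->
    Gt f Lx eps eta_x xt ut p (nth (@vzero nx) xs (p - 1)%N).

Definition strong_eps_ASR {nx nu : nat} (f : vec nx -> vec nu -> vec nx)
  (X0 : vec nx -> Prop) (U : vec nu -> Prop) (Lx eta_x eta_u : R) (Mmax : nat)
  (eps : R) (Rel : vec nx -> vec nx -> Prop) : Prop :=
  (forall xt x, Rel xt x -> Xt nx eta_x xt) /\
  (forall xt0, Xt0 X0 eta_x xt0 -> exists x0, X0 x0 /\ Rel xt0 x0) /\
  (forall xt x, Rel xt x -> vdist xt x <= eps) /\
  (forall xt x, Rel xt x ->
     forall (ut : vec nu) (mt : nat), Ut U eta_u ut -> Mt Mmax mt ->
       U ut /\ M_A mt /\
       forall xs, O_A f x ut mt xs ->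
         exists xts, Ot f Lx eps eta_x xt ut mt xts /\
           forall p : nat, (1 <= p <= mt)%N ->
             Rel (nth (@vzero nx) xts (p - 1)%N) (nth (@vzero nx) xs (p - 1)%N)).

Definition R_eps {nx : nat} (eta_x eps : R) (xt x : vec nx) : Prop :=
  Xt nx eta_x xt /\ vdist xt x <= eps.

(* Main.v *)
Require Import Defs.
From Stdlib Require Import Reals ZArith Lra Lia.
From mathcomp Require Import all_boot.
Open Scope R_scope.

Lemma bsplit n (F G : 'I_n -> R) :
  \big[Rplus/R0]_(i<n) (F i + G i) = \big[Rplus/R0]_(i<n) F i + \big[Rplus/R0]_(i<n) G i.
Proof.
apply: (big_ind3 (fun a b c => a = b + c)); first lra.
- move=> *; lra.
- by [].
Qed.

Lemma bscale n (c : R) (F : 'I_n -> R) :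
  \big[Rplus/R0]_(i<n) (c * F i) = c * \big[Rplus/R0]_(i<n) F i.
Proof.
apply: (big_ind2 (fun a b => a = c * b)); first ring.
- move=> x1 x2 y1 y2 -> ->; ring.
- by [].
Qed.

Lemma bge0 n (F : 'I_n -> R) : (forall i, 0 <= F i) -> 0 <= \big[Rplus/R0]_(i<n) F i.
Proof.
move=> H; apply: (big_ind (fun a => 0 <= a)); first lra.
- move=> *; lra.
- by move=> i _; apply: H.
Qed.

Lemma ble n (F G : 'I_n -> R) : (forall i, F i <= G i) ->
  \big[Rplus/R0]_(i<n) F i <= \big[Rplus/R0]_(i<n) G i.
Proof.
move=> H; apply: (big_ind2 (fun a b => a <= b)); first lra.
- move=> *; lra.
- by move=> i _; apply: H.
Qed.

Lemma bconst n (c : R) : \big[Rplus/R0]_(i<n) c = INR n * c.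
Proof.
rewrite big_const_ord; elim: n => [|n IH]; first by rewrite /=; ring.
rewrite iterS IH S_INR; ring.
Qed.

Lemma disc (P A B : R) : 0 <= A -> 0 <= B ->
  (forall t, 2 * t * P <= t * t * A + B) -> P * P <= A * B.
Proof.
move=> hA hB H.
destruct (Rle_lt_or_eq_dec 0 A hA) as [hA'|hA'].
- have := H (P / A).
  have -> : 2 * (P / A) * P = 2 * (P * P) / A by field; lra.
  have -> : P / A * (P / A) * A = (P * P) / A by field; lra.
  move=> h.
  have h2 : (P * P) / A <= B by lra.
  have h3 := Rmult_le_compat_r A _ _ hA h2.
  have -> : P * P = P * P / A * A by field; lra.
  lra.
- subst A.
  destruct (Rlt_or_le 0 P) as [hP|hP].
  + have := H ((B + 1) / (2 * P)).
    have -> : 2 * ((B + 1) / (2 * P)) * P = B + 1 by field; lra.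
    lra.
  + destruct (Rlt_or_le P 0) as [hP'|hP'].
    * have := H ((B + 1) / (2 * P)).
      have -> : 2 * ((B + 1) / (2 * P)) * P = B + 1 by field; lra.
      lra.
    * have -> : P = 0 by lra. lra.
Qed.

Lemma vnorm_tri n (a b : vec n) :
  vnorm (fun i => a i + b i) <= vnorm a + vnorm b.
Proof.
rewrite /vnorm.
set A := \big[Rplus/R0]_(i<n) (a i * a i).
set B := \big[Rplus/R0]_(i<n) (b i * b i).
set P := \big[Rplus/R0]_(i<n) (a i * b i).
have hA : 0 <= A by apply: bge0 => i; nra.
have hB : 0 <= B by apply: bge0 => i; nra.
have hP : P * P <= A * B.
  apply: disc => // t.
  have e1 : \big[Rplus/R0]_(i<n) (2 * t * (a i * b i)) = 2 * t * P by rewrite bscale.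
  have e2 : \big[Rplus/R0]_(i<n) (t * t * (a i * a i) + b i * b i) = t * t * A + B
    by rewrite bsplit bscale.
  rewrite -e1 -e2; apply: ble => i; have := Rle_0_sqr (t * a i - b i); rewrite /Rsqr; nra.
have hPle : P <= sqrt A * sqrt B.
  rewrite -sqrt_mult //.
  destruct (Rle_or_lt P 0) as [h|h].
  + have := sqrt_pos (A * B); lra.
  + rewrite -(sqrt_square P); last lra.
    apply: sqrt_le_1_alt; lra.
have e : \big[Rplus/R0]_(i<n) ((a i + b i) * (a i + b i)) = A + 2 * P + B.
  have -> : \big[Rplus/R0]_(i<n) ((a i + b i) * (a i + b i)) =
     \big[Rplus/R0]_(i<n) ((a i * a i + 2 * (a i * b i)) + b i * b i).
    by apply: eq_bigr => i _; ring.
  by rewrite bsplit bsplit bscale.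
rewrite e.
have sA := sqrt_pos A; have sB := sqrt_pos B.
have qA := sqrt_sqrt A hA; have qB := sqrt_sqrt B hB.
rewrite -(sqrt_square (sqrt A + sqrt B)); last lra.
apply: sqrt_le_1_alt; nra.
Qed.

Lemma vdist_tri n (x y z : vec n) : vdist x z <= vdist x y + vdist y z.
Proof.
rewrite /vdist.
have -> : vnorm (fun i => x i - z i) = vnorm (fun i => (x i - y i) + (y i - z i)).
  by rewrite /vnorm; f_equal; apply: eq_bigr => i _; ring.
exact (@vnorm_tri n (fun i => x i - y i) (fun i => y i - z i)).
Qed.

Lemma vdist_sym n (x y : vec n) : vdist x y = vdist y x.
Proof. by rewrite /vdist /vnorm; f_equal; apply: eq_bigr => i _; ring. Qed.

Lemma vdist_self n (x : vec n) : vdist x x = 0.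
Proof.
rewrite /vdist /vnorm.
have -> : \big[Rplus/R0]_(i<n) ((x i - x i) * (x i - x i)) = 0.
  apply: (big_ind (fun a => a = 0)) => //.
  - by move=> a b -> ->; ring.
  - by move=> i _; ring.
exact: sqrt_0.
Qed.

Lemma phi_lip nx nu (f : vec nx -> vec nu -> vec nx) (Lx : R) (u : vec nu) :
  0 <= Lx ->
  (forall x1 x2, vdist (f x1 u) (f x2 u) <= Lx * vdist x1 x2) ->
  forall p x1 x2, vdist (phi f x1 u p) (phi f x2 u p) <= Lx ^ p * vdist x1 x2.
Proof.
move=> hL H; elim => [|p IH] x1 x2 /=; first lra.
apply: Rle_trans; first exact: H.
rewrite Rmult_assoc; apply: Rmult_le_compat_l => //; exact: IH.
Qed.

Definition rnd (n : nat) (eta : R) (y : vec n) : vec n :=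
  fun i => 2 * eta / sqrt (INR n) * IZR (up (y i / (2 * eta / sqrt (INR n)) + / 2) - 1).

Lemma rnd_lat n eta y : Xt n eta (rnd n eta y).
Proof. split => // i; eexists; reflexivity. Qed.

Lemma rnd_dist n eta y : 0 < eta -> vdist (rnd n eta y) y <= eta.
Proof.
move=> he.
case: n y => [|n] y.
  rewrite /vdist /vnorm big_ord0 sqrt_0; lra.
set h := 2 * eta / sqrt (INR n.+1).
have hs : 0 < sqrt (INR n.+1) by apply: sqrt_lt_R0; apply: lt_0_INR; lia.
have hh : 0 < h by rewrite /h; apply: Rdiv_lt_0_compat; lra.
have hterm : forall i, (rnd n.+1 eta y i - y i) * (rnd n.+1 eta y i - y i) <= h * h / 4.
  move=> i; rewrite /rnd -/h.
  set t := y i / h + / 2.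
  have [a1 a2] := archimed t.
  rewrite minus_IZR.
  set d := IZR (up t) - 1 - y i / h.
  have hd : h * (IZR (up t) - 1) - y i = h * d by rewrite /d; field; lra.
  rewrite hd.
  have ht : t = y i / h + / 2 by [].
  have hdv : d = IZR (up t) - 1 - y i / h by [].
  have : - / 2 < d <= / 2 by lra.
  move=> [d1 d2].
  have : d * d <= / 4 by nra.
  move=> dd.
  have -> : h * d * (h * d) = h * h * (d * d) by ring.
  have hh2 : 0 <= h * h by nra.
  have := Rmult_le_compat_l _ _ _ hh2 dd; lra.
have hsum := @ble n.+1 (fun i => (rnd n.+1 eta y i - y i) * (rnd n.+1 eta y i - y i))
                 (fun _ => h * h / 4) hterm.
rewrite bconst in hsum.
have hq : INR n.+1 * (h * h / 4) = eta * eta.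
  rewrite /h.
  have hsq := sqrt_sqrt (INR n.+1) (pos_INR _).
  have hn : 0 < INR n.+1 by apply: lt_0_INR; lia.
  have -> : 2 * eta / sqrt (INR n.+1) * (2 * eta / sqrt (INR n.+1))
           = 4 * eta * eta / (sqrt (INR n.+1) * sqrt (INR n.+1)) by field; lra.
  rewrite hsq; field; lra.
rewrite hq in hsum.
rewrite /vdist /vnorm; rewrite -[X in _ <= X](sqrt_square eta); last lra.
exact: sqrt_le_1_alt.
Qed.

Theorem lemma2 (nx nu : nat) (f : vec nx -> vec nu -> vec nx)
  (X0 : vec nx -> Prop) (U : vec nu -> Prop) (Lx : R)
  (HX0 : compact_set X0) (HU : compact_set U) (HLx : 0 <= Lx)
  (Hlip : forall (x1 x2 : vec nx) (u : vec nu), U u ->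
            vdist (f x1 u) (f x2 u) <= Lx * vdist x1 x2)
  (eta_x eta_u : R) (Mmax : nat) (eps : R)
  (Hetax : 0 < eta_x) (Hetau : 0 < eta_u) (HMmax : (0 < Mmax)%N)
  (Heps : eta_x <= eps) :
  strong_eps_ASR f X0 U Lx eta_x eta_u Mmax eps (R_eps eta_x eps).
Proof.
split; first by move=> xt x [].
split.
  move=> xt0 [hX hc]; exists xt0; split => //; split; first by split.
  rewrite vdist_self; lra.
split; first by move=> xt x [].
move=> xt x [hxt hd] ut mt [hU _] hmt.
split => //.
have hm : (1 <= mt)%N by case/andP: hmt.
split => //.
move=> xs [hsz hxs].
exists (map (rnd nx eta_x) xs).
have key : forall p, (1 <= p <= mt)%N ->
   nth (vzero nx) (map (rnd nx eta_x) xs) (p - 1) = rnd nx eta_x (phi f x ut p).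
  move=> p hp.
  have hlt : (p - 1 < size xs)%N by rewrite hsz; case/andP: hp => h1 h2; rewrite ltn_subLR // add1n ltnS.
  rewrite (nth_map (vzero nx)) //.
  by rewrite -(hxs p hp).
split.
  split; first by rewrite size_map.
  move=> p hp; rewrite key //; split; first exact: rnd_lat.
  rewrite /eps_m.
  apply: Rle_trans; first exact: (vdist_tri _ _ (phi f x ut p)).
  have h1 := rnd_dist nx eta_x (phi f x ut p) Hetax.
  have h2 := @phi_lip nx nu f Lx ut HLx (fun x1 x2 => Hlip x1 x2 ut hU) p x xt.
  rewrite vdist_sym in hd.
  have hp0 := pow_le Lx p HLx.
  have := Rmult_le_compat_l _ _ _ hp0 hd; lra.
move=> p hp; have e := hxs p hp; rewrite /G_A in e; rewrite key // e; split; first exact: rnd_lat.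
have := rnd_dist nx eta_x (phi f x ut p) Hetax; lra.
Qed.
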